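(* For every $k\ge1$ there is $c>0$ such that the following holds. For every $n\ge k$ and every pair $w,u$ of functions from $[n]^{(k)}$ to $\mathbb{R}$, $$\mathbb{E}_\pi|\langle w_\pi,u\rangle| \ge c\, \gamma(w,u) \sqrt n,$$ where $\pi$ is a uniformly random permutation of $[n]$.
   Context: $[n]=\{1,\dots,n\}$; $V^{(k)}$ is the family of $k$-subsets of $V$; $\langle w,u\rangle=\sum_{e\in V^{(k)}}w(e)u(e)$; for a permutation $\pi$ of $V$, $w_\pi(e)=w(\pi^{-1}(e))$. Fix distinct $x,y\in V$ and let $\tau=(xy)$; then $\gamma(w,u)=\mathbb{E}_{\pi,\sigma}|\langle w_\pi,u_\sigma\rangle-\langle w_{\tau\pi},u_\sigma\rangle|$ with $\pi,\sigma$ independent uniformly random permutations of $V$ (this does not depend on the choice of $x,y$). *)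

(* Defs.v *)
(* V = [n] is modelled as 'I_n; k-subsets as {set 'I_n} with #|e| = k. *)
From mathcomp Require Import all_boot all_order all_algebra all_fingroup.
From mathcomp Require Import all_reals.
Set Implicit Arguments. Unset Strict Implicit. Unset Printing Implicit Defensive.
Import Order.TTheory GRing.Theory Num.Theory.
Local Open Scope ring_scope.

Section Defs.
Variable R : realType.

Definition inner (n k : nat) (w u : {set 'I_n} -> R) : R :=
  \sum_(e : {set 'I_n} | #|e| == k) w e * u e.

Definition permf (n : nat) (pi : {perm 'I_n}) (w : {set 'I_n} -> R) : {set 'I_n} -> R :=
  fun e => w ((pi^-1)%g @: e).

Definition Eperm (n : nat) (f : {perm 'I_n} -> R) : R :=
  (\sum_(pi : {perm 'I_n}) f pi) / #|{: {perm 'I_n}}|%:R.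

(* the composition tau o pi as functions (x |-> tau (pi x)); in mathcomp's
   perm group (s * t) x = t (s x), so tau o pi = pi * tau. *)
Definition comp_after (n : nat) (tau pi : {perm 'I_n}) : {perm 'I_n} := (pi * tau)%g.

Definition gamma (n k : nat) (x y : 'I_n) (w u : {set 'I_n} -> R) : R :=
  Eperm (fun pi => Eperm (fun sigma =>
    `| inner k (permf pi w) (permf sigma u)
       - inner k (permf (comp_after (tperm x y) pi) w) (permf sigma u) |)).

End Defs.

(* Main.v *)
Require Import Defs.
From mathcomp Require Import all_boot all_order all_algebra all_fingroup.
From mathcomp Require Import all_reals.
From mathcomp Require Import ring lra zify.
Import Order.TTheory GRing.Theory Num.Theory.
Local Open Scope ring_scope.

Set Implicit Arguments. Unset Strict Implicit. Unset Printing Implicit Defensive.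

Section ExSec.
Variable R : realType.

Definition Ex (U : finType) (f : U -> R) : R := (\sum_(x : U) f x) / #|U|%:R.

Lemma ExD (U : finType) (f g : U -> R) : Ex (fun x => f x + g x) = Ex f + Ex g.
Proof. by rewrite /Ex big_split /= mulrDl. Qed.

Lemma ExZ (U : finType) (a : R) (f : U -> R) : Ex (fun x => a * f x) = a * Ex f.
Proof. by rewrite /Ex -mulr_sumr mulrA. Qed.

Lemma ExN (U : finType) (f : U -> R) : Ex (fun x => - f x) = - Ex f.
Proof. by rewrite /Ex sumrN mulNr. Qed.

Lemma ExB (U : finType) (f g : U -> R) : Ex (fun x => f x - g x) = Ex f - Ex g.
Proof. by rewrite ExD ExN. Qed.

Lemma Ex_ext (U : finType) (f g : U -> R) : (forall x, f x = g x) -> Ex f = Ex g.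
Proof. by move=> H; rewrite /Ex; congr (_ / _); apply: eq_bigr => x _; rewrite H. Qed.

Lemma Ex_cst (U : finType) (x0 : U) (c : R) : Ex (fun _ : U => c) = c.
Proof.
have N0 : #|U|%:R != 0 :> R.
  by rewrite pnatr_eq0 -lt0n; apply/card_gt0P; exists x0.
rewrite /Ex sumr_const -[c *+ _]mulr_natr -mulrA.
rewrite (_ : #|xpredT| = #|U|); last by apply: eq_card.
by rewrite divff ?mulr1.
Qed.

Lemma Ex_le (U : finType) (f g : U -> R) : (forall x, f x <= g x) -> Ex f <= Ex g.
Proof.
move=> H; rewrite /Ex ler_wpM2r ?invr_ge0 ?ler0n //.
by apply: ler_sum => x _; apply: H.
Qed.

Lemma Ex_ge0 (U : finType) (f : U -> R) : (forall x, 0 <= f x) -> 0 <= Ex f.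
Proof.
move=> H; rewrite /Ex mulr_ge0 ?invr_ge0 ?ler0n //.
by apply: sumr_ge0 => x _; apply: H.
Qed.

Lemma Ex_reindex (U : finType) (h : U -> U) (f : U -> R) :
  injective h -> Ex (fun x => f (h x)) = Ex f.
Proof. by move=> hi; rewrite /Ex [in RHS](reindex_inj hi). Qed.

Lemma Ex_swap (U V : finType) (F : U -> V -> R) :
  Ex (fun x => Ex (fun y => F x y)) = Ex (fun y => Ex (fun x => F x y)).
Proof.
rewrite /Ex -!mulr_suml exchange_big /=.
by rewrite -!mulrA [_^-1 * _^-1]mulrC.
Qed.

Lemma Ex_sum (U : finType) (I : finType) (F : I -> U -> R) :
  Ex (fun x => \sum_(j : I) F j x) = \sum_(j : I) Ex (F j).
Proof.
rewrite /Ex exchange_big /= mulr_suml //.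
Qed.

Lemma CS_sum (I : finType) (a b : I -> R) :
  (\sum_i a i * b i) ^+ 2 <= (\sum_i a i ^+ 2) * (\sum_i b i ^+ 2).
Proof.
set A := \sum_i a i ^+ 2; set B := \sum_i b i ^+ 2; set C := \sum_i a i * b i.
have A0 : 0 <= A by apply: sumr_ge0 => i _; apply: sqr_ge0.
have B0 : 0 <= B by apply: sumr_ge0 => i _; apply: sqr_ge0.
have key : forall t, 0 <= t ^+ 2 * A - 2 * t * C + B.
  move=> t.
  have -> : t ^+ 2 * A - 2 * t * C + B = \sum_i (a i * t - b i) ^+ 2.
    rewrite /A /B /C mulr_sumr mulr_sumr -sumrN -!big_split /=.
    by apply: eq_bigr => i _; ring.
  by apply: sumr_ge0 => i _; apply: sqr_ge0.
have [Az|Ap] := eqVneq A 0.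
  have a0 : forall i, a i = 0.
    move=> i; apply/eqP; rewrite -sqrf_eq0; apply/eqP.
    move/eqP: Az; rewrite psumr_eq0 => [/allP H|i0 _]; last exact: sqr_ge0.
    by apply/eqP; apply: H; rewrite mem_index_enum.
  have -> : C = 0 by rewrite /C big1 // => i _; rewrite a0 mul0r.
  by rewrite Az expr0n /= mul0r.
have Ap' : 0 < A by rewrite lt_def Ap A0.
have := key (C / A).
have -> : (C / A) ^+ 2 * A - 2 * (C / A) * C + B = B - C ^+ 2 / A.
  by field; rewrite Ap.
rewrite subr_ge0 ler_pdivrMr // => H.
by rewrite mulrC.
Qed.

Lemma Ex_CS (U : finType) (a b : U -> R) :
  Ex (fun x => a x * b x) ^+ 2 <= Ex (fun x => a x ^+ 2) * Ex (fun x => b x ^+ 2).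
Proof.
rewrite /Ex.
have := CS_sum a b.
set c := #|U|%:R^-1.
have c0 : 0 <= c by rewrite invr_ge0 ler0n.
move=> H.
have -> : ((\sum_x a x * b x) * c) ^+ 2 = (\sum_x a x * b x) ^+ 2 * c ^+ 2 by rewrite exprMn.
have -> : (\sum_x a x ^+ 2) * c * ((\sum_x b x ^+ 2) * c) =
   ((\sum_x a x ^+ 2) * (\sum_x b x ^+ 2)) * c ^+ 2 by ring.
by rewrite ler_wpM2r // sqr_ge0.
Qed.

End ExSec.

Set Implicit Arguments. Unset Strict Implicit. Unset Printing Implicit Defensive.

Section Cube.
Variable R : realType.
Variable m : nat.
Notation T := {ffun 'I_m -> bool}.

Definition upd (x : T) (i : 'I_m) (b : bool) : T :=
  [ffun j => if j == i then b else x j].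
Definition sg (b : bool) : R := if b then 1 else -1.
Definition Ei (i : 'I_m) (f : T -> R) (x : T) : R :=
  (f (upd x i true) + f (upd x i false)) / 2.
Definition Di (i : 'I_m) (f : T -> R) (x : T) : R :=
  (f (upd x i true) - f (upd x i false)) / 2.
Definition invar (i : 'I_m) (f : T -> R) := forall x b, f (upd x i b) = f x.

Lemma upd_id x i : upd x i (x i) = x.
Proof. by apply/ffunP => j; rewrite ffunE; case: eqP => // ->. Qed.

Lemma upd_upd x i b c : upd (upd x i b) i c = upd x i c.
Proof. by apply/ffunP => j; rewrite !ffunE; case: eqP. Qed.

Lemma upd_comm x i j b c : i != j -> upd (upd x i b) j c = upd (upd x j c) i b.
Proof.
move=> ij; apply/ffunP => l; rewrite !ffunE.
case: (eqVneq l j) => [->|lj]; first by rewrite eq_sym (negPf ij).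
by case: (eqVneq l i).
Qed.

Lemma upd_at x i b : upd x i b i = b.
Proof. by rewrite ffunE eqxx. Qed.

Lemma upd_off x i j b : j != i -> upd x i b j = x j.
Proof. by move=> ji; rewrite ffunE (negPf ji). Qed.

Lemma decomp f i x : f x = Ei i f x + sg (x i) * Di i f x.
Proof.
rewrite /Ei /Di /sg; case E: (x i).
  by rewrite -{1}(upd_id x i) E; field.
by rewrite -{1}(upd_id x i) E; field.
Qed.

Lemma Ei_inv f i : invar i (Ei i f).
Proof. by move=> x b; rewrite /Ei !upd_upd. Qed.

Lemma Di_inv f i : invar i (Di i f).
Proof. by move=> x b; rewrite /Di !upd_upd. Qed.

Lemma Di_of_inv f i x : invar i f -> Di i f x = 0.
Proof. by move=> H; rewrite /Di !H subrr mul0r. Qed.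

Definition x0 : T := [ffun => false].

Lemma Ex_sg_inv i (phi : T -> R) : invar i phi ->
  Ex (fun x : T => sg (x i) * phi x) = 0.
Proof.
move=> H.
pose fl (x : T) := upd x i (~~ x i).
have flK : involutive fl.
  by move=> x; rewrite /fl upd_upd upd_at negbK upd_id.
have E := Ex_reindex (fun x : T => sg (x i) * phi x) (inv_inj flK).
have E2 : Ex (fun x : T => sg (fl x i) * phi (fl x)) = - Ex (fun x : T => sg (x i) * phi x).
  rewrite -ExN; apply: Ex_ext => x; rewrite /fl H upd_at /sg.
  by case: (x i) => /=; rewrite ?mulN1r ?mul1r ?opprK.
rewrite E in E2.
have : 2 * Ex (fun x : T => sg (x i) * phi x) = 0 by rewrite mulr2n; lra.
by move/eqP; rewrite mulf_eq0 pnatr_eq0 /= => /eqP.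
Qed.

Lemma sg2 b : sg b ^+ 2 = 1.
Proof. by case: b; rewrite /sg ?expr1n ?sqrrN ?expr1n. Qed.

Lemma mom2 i (g h : T -> R) : invar i g -> invar i h ->
  Ex (fun x : T => (g x + sg (x i) * h x) ^+ 2) = Ex (fun x : T => g x ^+ 2) + Ex (fun x : T => h x ^+ 2).
Proof.
move=> Hg Hh.
rewrite (@Ex_ext _ _ _ (fun x : T => (g x ^+ 2 + h x ^+ 2) + sg (x i) * (2 * g x * h x))); last first.
  move=> x; have := sg2 (x i); set s := sg (x i) => Hs.
  have -> : (g x + s * h x) ^+ 2 = g x ^+ 2 + s ^+ 2 * h x ^+ 2 + s * (2 * g x * h x) by ring.
  by rewrite Hs mul1r.
rewrite ExD ExD Ex_sg_inv ?addr0 // => x b.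
by rewrite Hg Hh.
Qed.

Lemma mom4 i (g h : T -> R) : invar i g -> invar i h ->
  Ex (fun x : T => (g x + sg (x i) * h x) ^+ 4) =
  Ex (fun x : T => g x ^+ 4) + 6 * Ex (fun x : T => g x ^+ 2 * h x ^+ 2) + Ex (fun x : T => h x ^+ 4).
Proof.
move=> Hg Hh.
rewrite (@Ex_ext _ _ _ (fun x : T => (g x ^+ 4 + 6 * (g x ^+ 2 * h x ^+ 2) + h x ^+ 4) +
      sg (x i) * (4 * g x ^+ 3 * h x + 4 * g x * h x ^+ 3))); last first.
  move=> x; have := sg2 (x i); set s := sg (x i) => Hs.
  have -> : (g x + s * h x) ^+ 4 = g x ^+ 4 + 6 * (s^+2 * (g x ^+ 2 * h x ^+ 2)) + (s^+2)^+2 * h x ^+ 4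
      + s * (s ^+ 2 * (4 * g x * h x ^+ 3) + 4 * g x ^+ 3 * h x) by ring.
  rewrite Hs !mul1r expr1n mul1r; ring.
rewrite ExD Ex_sg_inv ?addr0; last by move=> x b; rewrite Hg Hh.
by rewrite ExD ExD ExZ.
Qed.

Definition dep (S : {set 'I_m}) (f : T -> R) :=
  forall x y : T, (forall j, j \in S -> x j = y j) -> f x = f y.

Definition lowdeg (k : nat) (A : {set 'I_m}) (f : T -> R) :=
  exists N (S : 'I_N -> {set 'I_m}) (F : 'I_N -> T -> R),
    (forall j, [/\ S j \subset A, (#|S j| <= k)%N & dep (S j) (F j)]) /\
    forall x, f x = \sum_j F j x.

Lemma Di_notin (S : {set 'I_m}) f i x : dep S f -> i \notin S -> Di i f x = 0.
Proof.
move=> H iS; rewrite /Di (H (upd x i true) (upd x i false)) ?subrr ?mul0r //.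
by move=> j jS; rewrite !upd_off //; apply: contraNneq iS => <-.
Qed.

Lemma dep_upd (S : {set 'I_m}) f i b x y :
  dep S f -> (forall j, j \in S :\ i -> (x : T) j = (y : T) j) -> f (upd x i b) = f (upd y i b).
Proof.
move=> H E; apply: H => j jS; rewrite !ffunE; case: eqP => // /eqP ji.
by apply: E; rewrite !inE ji.
Qed.

Lemma lowdeg_Ei k A f i : lowdeg k A f -> lowdeg k (A :\ i) (Ei i f).
Proof.
case=> N [S [F [HS Hf]]].
exists N, (fun j => S j :\ i), (fun j => Ei i (F j)); split.
  move=> j; have [H1 H2 H3] := HS j; split.
  - by apply: setSD.
  - by apply: leq_trans H2; apply: subset_leq_card; apply: subD1set.
  - by move=> x y E; rewrite /Ei (dep_upd true H3 E) (dep_upd false H3 E).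
move=> x; rewrite /Ei !Hf -big_split /= mulr_suml.
by apply: eq_bigr.
Qed.

Lemma lowdeg_Di k A f i : lowdeg k A f -> lowdeg k.-1 (A :\ i) (Di i f).
Proof.
case=> N [S [F [HS Hf]]].
exists N, (fun j => if i \in S j then S j :\ i else set0), (fun j => Di i (F j)); split.
  move=> j; have [H1 H2 H3] := HS j; case: ifP => iS; split.
  - by apply: setSD.
  - by move: H2; rewrite (cardsD1 i (S j)) iS; lia.
  - by move=> x y E; rewrite /Di (dep_upd true H3 E) (dep_upd false H3 E).
  - by rewrite sub0set.
  - by rewrite cards0.
  - by move=> x y _; rewrite !(Di_notin _ H3) ?iS.
move=> x; rewrite /Di !Hf -sumrB mulr_suml.
by apply: eq_bigr.
Qed.

Lemma lowdeg0_Di A f i x : lowdeg 0 A f -> Di i f x = 0.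
Proof.
case=> N [S [F [HS Hf]]].
rewrite /Di !Hf -sumrB mulr_suml big1 // => j _.
have [_ H2 H3] := HS j.
have iS : i \notin S j by move: H2; rewrite leqn0 cards_eq0 => /eqP ->; rewrite inE.
by have := Di_notin x H3 iS; rewrite /Di.
Qed.

Lemma lowdeg_set0 k f : lowdeg k set0 f -> forall x, f x = f x0.
Proof.
case=> N [S [F [HS Hf]]] x; rewrite !Hf; apply: eq_bigr => j _.
have [H1 _ H3] := HS j; apply: H3 => l lS.
by move: H1; rewrite subset0 => /eqP Sj; rewrite Sj inE in lS.
Qed.

End Cube.
Arguments sg {R} b.

Set Implicit Arguments. Unset Strict Implicit. Unset Printing Implicit Defensive.

Section Cube2.
Variable R : realType.
Variable m : nat.
Notation T := {ffun 'I_m -> bool}.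
Implicit Types f g h : T -> R.

Lemma sqrle (C D : R) : 0 <= D -> C ^+ 2 <= D ^+ 2 -> C <= D.
Proof. move=> D0 H; nra. Qed.

Lemma Ex0 (f : T -> R) : (forall x, f x = 0) -> Ex f = 0.
Proof. by move=> H; rewrite (Ex_ext H) (Ex_cst (x0 m)). Qed.

Lemma bonami_cst k f : (forall x, f x = f (x0 m)) ->
  Ex (fun x : T => f x ^+ 4) <= 9 ^+ k * Ex (fun x : T => f x ^+ 2) ^+ 2.
Proof.
move=> H.
rewrite (Ex_ext (g := fun _ => f (x0 m) ^+ 4)); last by move=> x; rewrite H.
rewrite (Ex_ext (f := fun x => f x ^+ 2) (g := fun _ => f (x0 m) ^+ 2)); last by move=> x; rewrite H.
rewrite !(Ex_cst (x0 m)) -exprM /=.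
apply: ler_peMl; first by rewrite exprn_even_ge0.
by apply: exprn_ege1; rewrite ler1n.
Qed.

Lemma bonami n : forall k (A : {set 'I_m}) f, (#|A| <= n)%N -> lowdeg k A f ->
  Ex (fun x : T => f x ^+ 4) <= 9 ^+ k * Ex (fun x : T => f x ^+ 2) ^+ 2.
Proof.
elim: n => [|n IH] k A f hA hf.
  move: hA; rewrite leqn0 cards_eq0 => /eqP A0; subst A.
  by apply: bonami_cst; apply: lowdeg_set0 hf.
have [A0|[i iA]] := set_0Vmem A.
  by subst A; apply: bonami_cst; apply: lowdeg_set0 hf.
have hA' : (#|A :\ i| <= n)%N by move: hA; rewrite (cardsD1 i A) iA; lia.
set g := Ei i f; set h := Di i f.
have dec x : f x = g x + sg (x i) * h x by apply: decomp.
rewrite (Ex_ext (f := fun x => f x ^+ 4) (g := fun x => (g x + sg (x i) * h x) ^+ 4)); last by move=> x; rewrite -dec.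
rewrite (Ex_ext (f := fun x => f x ^+ 2) (g := fun x => (g x + sg (x i) * h x) ^+ 2)); last by move=> x; rewrite -dec.
rewrite mom4 ?mom2; try by [apply: Ei_inv | apply: Di_inv].
have Hg := IH k _ g hA' (lowdeg_Ei i hf).
case: k hf Hg => [|k] hf Hg.
  have h0 x : h x = 0 by apply: (lowdeg0_Di _ _ hf).
  rewrite (@Ex0 (fun x => h x ^+ 4)) ?(@Ex0 (fun x => g x ^+ 2 * h x ^+ 2)) ?(@Ex0 (fun x => h x ^+ 2));
    try by move=> x; rewrite h0 expr0n ?mulr0.
  by rewrite !addr0 mulr0 addr0.
have Hh := IH k _ h hA' (lowdeg_Di i hf).
have CS := Ex_CS (fun x => g x ^+ 2) (fun x => h x ^+ 2).
rewrite (Ex_ext (f := fun x => (g x ^+ 2) ^+ 2) (g := fun x => g x ^+ 4)) in CS; last by move=> x; rewrite -exprM.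
rewrite (Ex_ext (f := fun x => (h x ^+ 2) ^+ 2) (g := fun x => h x ^+ 4)) in CS; last by move=> x; rewrite -exprM.
move: Hg Hh CS.
set G4 := Ex (fun x : T => g x ^+ 4); set H4 := Ex (fun x : T => h x ^+ 4).
set C := Ex (fun x : T => g x ^+ 2 * h x ^+ 2).
set a := Ex (fun x : T => g x ^+ 2); set b := Ex (fun x : T => h x ^+ 2).
have a0 : 0 <= a by apply: Ex_ge0 => x; apply: sqr_ge0.
have b0 : 0 <= b by apply: Ex_ge0 => x; apply: sqr_ge0.
have G40 : 0 <= G4 by apply: Ex_ge0 => x; rewrite exprn_even_ge0.
have H40 : 0 <= H4 by apply: Ex_ge0 => x; rewrite exprn_even_ge0.
rewrite exprS.
set t := 9 ^+ k.
have t0 : 0 <= t by rewrite exprn_ge0.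
move=> Hg Hh CS.
have Cle : C <= 3 * t * a * b.
  apply: sqrle; first by do 3! (apply: mulr_ge0 => //).
  apply: (le_trans CS).
  have -> : (3 * t * a * b) ^+ 2 = (9 * t * a ^+ 2) * (t * b ^+ 2) by ring.
  by apply: ler_pM.
have : t * b ^+ 2 <= 9 * t * b ^+ 2.
  by apply: ler_wpM2r; [apply: sqr_ge0 | lra].
nra.
Qed.

Lemma infl n : forall k (A : {set 'I_m}) f, (#|A| <= n)%N -> lowdeg k A f ->
  \sum_(j < m) Ex (fun x : T => Di j f x ^+ 2) <= k%:R * Ex (fun x : T => f x ^+ 2).
Proof.
elim: n => [|n IH] k A f hA hf.
  move: hA; rewrite leqn0 cards_eq0 => /eqP A0; subst A.
  have c := lowdeg_set0 hf.
  rewrite big1 => [|j _]; first by rewrite mulr_ge0 ?ler0n // Ex_ge0 // => x; apply: sqr_ge0.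
  by apply: Ex0 => x; rewrite /Di !c subrr mul0r expr0n.
have [A0|[i iA]] := set_0Vmem A.
  subst A; have c := lowdeg_set0 hf.
  rewrite big1 => [|j _]; first by rewrite mulr_ge0 ?ler0n // Ex_ge0 // => x; apply: sqr_ge0.
  by apply: Ex0 => x; rewrite /Di !c subrr mul0r expr0n.
have hA' : (#|A :\ i| <= n)%N by move: hA; rewrite (cardsD1 i A) iA; lia.
set g := Ei i f; set h := Di i f.
have dec x : f x = g x + sg (x i) * h x by apply: decomp.
have gi : invar i g by apply: Ei_inv.
have hi : invar i h by apply: Di_inv.
have step j : Ex (fun x : T => Di j f x ^+ 2) =
   Ex (fun x : T => Di j g x ^+ 2) + Ex (fun x : T => Di j h x ^+ 2) + (j == i)%:R * Ex (fun x : T => h x ^+ 2).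
  have [->|ji] := eqVneq j i.
    rewrite (@Ex0 (fun x => Di i g x ^+ 2)) ?(@Ex0 (fun x => Di i h x ^+ 2)) ?add0r ?mul1r //;
    by move=> x; rewrite Di_of_inv // expr0n.
  rewrite mul0r addr0.
  rewrite (Ex_ext (f := fun x => Di j f x ^+ 2) (g := fun x => (Di j g x + sg (x i) * Di j h x) ^+ 2)).
    apply: mom2 => x b; rewrite /Di upd_comm 1?eq_sym // [in X in _ - X]upd_comm 1?eq_sym //.
      by rewrite !gi.
    by rewrite !hi.
  move=> x; congr (_ ^+ 2).
  have ij : i != j by rewrite eq_sym.
  rewrite /Di !dec !upd_off //; ring.
rewrite (eq_bigr _ (fun j _ => step j)) !big_split /=.
have -> : \sum_(j0 < m) (j0 == i)%:R * Ex (fun x : T => h x ^+ 2) = Ex (fun x : T => h x ^+ 2).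
  rewrite (bigD1 i) //= eqxx mul1r big1 ?addr0 // => j /negPf ->; by rewrite mul0r.
have Hg := IH k _ g hA' (lowdeg_Ei i hf).
have Hh := IH k.-1 _ h hA' (lowdeg_Di i hf).
rewrite (Ex_ext (f := fun x => f x ^+ 2) (g := fun x => (g x + sg (x i) * h x) ^+ 2)); last by move=> x; rewrite -dec.
rewrite mom2 //.
have b0 : 0 <= Ex (fun x : T => h x ^+ 2) by apply: Ex_ge0 => x; apply: sqr_ge0.
case: k hf Hg Hh => [|k] hf Hg Hh.
  have h0 x : h x = 0 by apply: (lowdeg0_Di _ _ hf).
  rewrite (@Ex0 (fun x => h x ^+ 2)) in Hh b0 *; last by move=> x; rewrite h0 expr0n.
  rewrite !mul0r in Hg Hh *; lra.
rewrite /= in Hh.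
have -> : (k.+1)%:R = k%:R + 1 :> R by rewrite -natr1.
rewrite -/(Ex _) in Hg Hh.
move: Hg Hh; set Sg := \sum_(j < m) _; set Sh := \sum_(j < m) _.
set a := Ex _; set b := Ex _ => Hg Hh.
have kk : 0 <= k%:R :> R by rewrite ler0n.
nra.
Qed.

End Cube2.

Set Implicit Arguments. Unset Strict Implicit. Unset Printing Implicit Defensive.

Section Cube3.
Variable R : realType.
Lemma normK2 (x : R) : `|x| ^+ 2 = x ^+ 2.
Proof. exact: real_normK (num_real x). Qed.
Variable m : nat.
Notation T := {ffun 'I_m -> bool}.

Lemma L2_L1 (f : T -> R) (k : nat) : lowdeg k setT f ->
  Ex (fun x : T => f x ^+ 2) <= 9 ^+ k * Ex (fun x : T => `|f x|) ^+ 2.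
Proof.
move=> hf.
have cT : (#|[set: 'I_m]| <= m)%N by rewrite cardsT card_ord.
have B := bonami (n := m) (A := setT) cT hf.
have B' := B; clear B.
have CS1 := Ex_CS (fun x : T => Num.sqrt `|f x|) (fun x : T => `|f x| * Num.sqrt `|f x|).
rewrite (Ex_ext (f := fun x : T => Num.sqrt `|f x| * (`|f x| * Num.sqrt `|f x|))
    (g := fun x : T => f x ^+ 2)) in CS1; last first.
  by move=> x; rewrite mulrCA -expr2 sqr_sqrtr // -expr2 normK2.
rewrite (Ex_ext (f := fun x : T => Num.sqrt `|f x| ^+ 2) (g := fun x : T => `|f x|)) in CS1; last first.
  by move=> x; rewrite sqr_sqrtr.
rewrite (Ex_ext (f := fun x : T => (`|f x| * Num.sqrt `|f x|) ^+ 2) (g := fun x : T => `|f x| ^+ 3)) in CS1; last first.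
  by move=> x; rewrite exprMn sqr_sqrtr // -exprSr.
have CS2 := Ex_CS (fun x : T => `|f x|) (fun x : T => `|f x| ^+ 2).
rewrite (Ex_ext (f := fun x : T => `|f x| * `|f x| ^+ 2) (g := fun x : T => `|f x| ^+ 3)) in CS2; last first.
  by move=> x; rewrite -exprS.
rewrite (Ex_ext (f := fun x : T => `|f x| ^+ 2) (g := fun x : T => f x ^+ 2)) in CS2; last first.
  by move=> x; rewrite normK2.
rewrite (Ex_ext (f := fun x : T => (`|f x| ^+ 2) ^+ 2) (g := fun x : T => f x ^+ 4)) in CS2; last first.
  by move=> x; rewrite normK2 -exprM.
move: B' CS1 CS2.
set N2 := Ex (fun x : T => f x ^+ 2); set N4 := Ex (fun x : T => f x ^+ 4).
set A := Ex (fun x : T => `|f x|); set A3 := Ex (fun x : T => `|f x| ^+ 3).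
set K := 9 ^+ k => B CS1 CS2.
have N20 : 0 <= N2 by apply: Ex_ge0 => x; apply: sqr_ge0.
have A0 : 0 <= A by apply: Ex_ge0 => x.
have A30 : 0 <= A3 by apply: Ex_ge0 => x; rewrite exprn_ge0.
have K0 : 0 <= K by rewrite exprn_ge0.
have [N2z|N2p] := eqVneq N2 0.
  by rewrite N2z mulr_ge0 // sqr_ge0.
have N2p' : 0 < N2 by rewrite lt_def N2p N20.
have H4 : N2 ^+ 4 <= (K * A ^+ 2) * N2 ^+ 3.
  apply: (le_trans (y := A ^+ 2 * A3 ^+ 2)).
    have -> : N2 ^+ 4 = (N2 ^+ 2) ^+ 2 by ring.
    have -> : A ^+ 2 * A3 ^+ 2 = (A * A3) ^+ 2 by ring.
    by rewrite [_ ^+ 2 ^+ 2]expr2 [(A * A3) ^+ 2]expr2; apply: ler_pM => //; exact: sqr_ge0.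
  apply: (le_trans (y := A ^+ 2 * (N2 * N4))).
    by apply: ler_wpM2l; first exact: sqr_ge0.
  apply: (le_trans (y := A ^+ 2 * (N2 * (K * N2 ^+ 2)))).
    by apply: ler_wpM2l; [exact: sqr_ge0 | apply: ler_wpM2l].
  by rewrite le_eqVlt; apply/orP; left; apply/eqP; ring.
have N23 : 0 < N2 ^+ 3 by rewrite exprn_gt0.
rewrite (_ : N2 ^+ 4 = N2 * N2 ^+ 3) in H4; last by ring.
by rewrite ler_pM2r in H4.
Qed.

Lemma abs_L2 (U : finType) (u0 : U) (g : U -> R) :
  Ex (fun x : U => `|g x|) ^+ 2 <= Ex (fun x : U => g x ^+ 2).
Proof.
have := Ex_CS (fun _ : U => 1) (fun x : U => `|g x|).
rewrite (Ex_ext (f := fun x : U => 1 * `|g x|) (g := fun x => `|g x|)); last by move=> x; rewrite mul1r.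
rewrite (Ex_ext (f := fun x : U => 1 ^+ 2) (g := fun x => 1)); last by move=> x; rewrite expr1n.
rewrite (Ex_cst u0) mul1r.
rewrite (Ex_ext (f := fun x : U => `|g x| ^+ 2) (g := fun x => g x ^+ 2)) //.
by move=> x; rewrite normK2.
Qed.

Lemma cube_main (f : T -> R) (k : nat) : lowdeg k setT f ->
  (\sum_(j < m) Ex (fun x : T => `|Di j f x|)) ^+ 2 <=
  (m%:R * k%:R * 9 ^+ k) * Ex (fun x : T => `|f x|) ^+ 2.
Proof.
move=> hf.
have cT : (#|[set: 'I_m]| <= m)%N by rewrite cardsT card_ord.
have I := infl (n := m) (A := setT) cT hf.
have L := L2_L1 hf.
have CS := CS_sum (fun _ : 'I_m => 1) (fun j => Ex (fun x : T => `|Di j f x|)).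
have S1 : \sum_(j < m) (1 : R) ^+ 2 = m%:R by rewrite (eq_bigr (fun _ => 1)) ?sumr_const ?card_ord // => j _; rewrite expr1n.
rewrite S1 in CS.
rewrite (eq_bigr (fun j => Ex (fun x : T => `|Di j f x|))) in CS; last by move=> j _; rewrite mul1r.
apply: (le_trans CS).
apply: (le_trans (y := m%:R * \sum_(j < m) Ex (fun x : T => Di j f x ^+ 2))).
  apply: ler_wpM2l; first by rewrite ler0n.
  by apply: ler_sum => j _; apply: (abs_L2 (x0 m)).
rewrite -!mulrA; apply: ler_wpM2l; first by rewrite ler0n.
apply: (le_trans I); apply: ler_wpM2l; first by rewrite ler0n.
exact: L.
Qed.

End Cube3.

Set Implicit Arguments. Unset Strict Implicit. Unset Printing Implicit Defensive.

Section Invol.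
Variable n : nat.
Notation m := n./2.
Notation T := {ffun 'I_m -> bool}.

Definition partner (z : nat) : nat := (~~ odd z) + (z./2).*2.

Lemma partnerK z : partner (partner z) = z.
Proof. by rewrite /partner oddD odd_double half_bit_double oddb addbF negbK odd_double_half. Qed.

Lemma half_partner z : (partner z)./2 = z./2.
Proof. by rewrite /partner half_bit_double. Qed.

Definition pfun (e : T) (z : 'I_n) : 'I_n :=
  if insub (z./2) is Some i then (if e i then insubd z (partner z) else z) else z.

Lemma partner_lt (z : 'I_n) : (z./2 < m)%N -> (partner z < n)%N.
Proof. by rewrite /partner; lia. Qed.

Lemma pfun_val e (z : 'I_n) :
  val (pfun e z) = if insub (z./2) is Some i then (if e i then partner z else z) else z.
Proof.
rewrite /pfun; case: insubP => [i Hi Ei|//].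
case: (e i) => //.
by rewrite val_insubd partner_lt.
Qed.

Lemma half_pfun e z : (val (pfun e z))./2 = z./2.
Proof.
rewrite pfun_val; case: (insub _) => [i|] //; case: (e i) => //; exact: half_partner.
Qed.

Lemma pfunK e : involutive (pfun e).
Proof.
move=> z; apply: val_inj; rewrite pfun_val half_pfun.
case Eo: (insub (z./2)) => [i|]; rewrite pfun_val Eo //.
case: (e i) => //; exact: partnerK.
Qed.

Definition P (e : T) : {perm 'I_n} := perm (can_inj (pfunK e)).

Lemma PE e z : P e z = pfun e z.
Proof. by rewrite permE. Qed.

Lemma P_inv e z : (P e)^-1%g z = P e z.
Proof.
apply: (@perm_inj _ (P e)); rewrite permKV !PE.
by rewrite pfunK.
Qed.

Definition delta (j : 'I_m) : T := [ffun i => i == j].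
Definition sP (j : 'I_m) : {perm 'I_n} := P (delta j).

Lemma P_flip e j : P (upd e j true) = (P (upd e j false) * sP j)%g.
Proof.
apply/permP => z; rewrite permM /sP; apply: val_inj; rewrite !PE pfun_val [in RHS]pfun_val half_pfun.
case Eo: (insub (z./2)) => [i|]; rewrite ?pfun_val Eo //.
have [->|ij] := eqVneq i j.
  by rewrite !upd_at /= ffunE eqxx.
rewrite !upd_off // ffunE (negPf ij).
by case: (e i).
Qed.

End Invol.

Set Implicit Arguments. Unset Strict Implicit. Unset Printing Implicit Defensive.

Section Main.
Variable R : realType.
Variables (n k : nat) (w u : {set 'I_n} -> R).
Notation m := n./2.
Notation T := {ffun 'I_m -> bool}.

Definition X (r : {perm 'I_n}) : R := inner k (permf r w) u.
Definition fr (r : {perm 'I_n}) (e : T) : R := X (r * P e)%g.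
Definition G (s : {perm 'I_n}) : R := Ex (fun r : {perm 'I_n} => `|X (r * s)%g - X r|).

Lemma P_agree (S : {set 'I_m}) (e e' : T) (z : 'I_n) :
  (forall i, i \in S -> e i = e' i) ->
  (forall i : 'I_m, z./2 = val i -> i \in S) -> P e z = P e' z.
Proof.
move=> Hag HS; apply: val_inj; rewrite !PE !pfun_val.
case: insubP => [i _ Ei|//].
by rewrite Hag // HS.
Qed.

Lemma lowdeg_fr r : lowdeg k setT (fr r).
Proof.
pose A := [pred e : {set 'I_n} | #|e| == k].
exists #|A|.
exists (fun j : 'I_#|A| => [set i : 'I_m | [exists z in enum_val j, (val z)./2 == val i]]).
exists (fun (j : 'I_#|A|) (e : T) => w ((r * P e)^-1%g @: enum_val j) * u (enum_val j)).
split.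
  move=> j; split; first exact: subsetT.
  - set E := enum_val j.
    have EA : E \in A by apply: enum_valP.
    rewrite inE in EA; rewrite -(eqP EA).
    set S := [set _ | _].
    have -> : #|S| = #|Some @: S| by rewrite card_imset //; exact: Some_inj.
    apply: (leq_trans (n := #|([set insub (val z)./2 | z in E] : {set option 'I_m})|)).
      apply: subset_leq_card; apply/subsetP => o /imsetP [i iS ->].
      rewrite inE in iS; case/existsP: iS => z /andP [zE /eqP hz].
      by apply/imsetP; exists z => //; rewrite hz valK.
    exact: leq_imset_card.
  - move=> e e' Hag; congr (w _ * _).
    apply: eq_in_imset => z zE.
    rewrite !invMg !permM !P_inv.
    congr (_ _); apply: (P_agree Hag) => i hi.
    by rewrite inE; apply/existsP; exists z; rewrite zE hi eqxx.
move=> e; rewrite /fr /X /inner /permf.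
rewrite -(big_enum_val (A := A) (fun e0 => w [set (r * P e)^-1%g x | x in e0] * u e0)) /=. by apply: eq_bigl => s; rewrite !inE.
Qed.

Lemma ExZ' (U : finType) (f : U -> R) (a : R) : Ex f / a = Ex (fun x => f x / a).
Proof. by rewrite mulrC -ExZ; apply: Ex_ext => x; rewrite mulrC. Qed.

Lemma sqrt_bound (a b M : R) : 0 <= a -> 0 <= b -> 0 <= M -> a ^+ 2 <= M * b ^+ 2 ->
  a <= Num.sqrt M * b.
Proof.
move=> a0 b0 M0 H.
have Hs : Num.sqrt (a ^+ 2) <= Num.sqrt (M * b ^+ 2).
  by rewrite ler_sqrt // mulr_ge0 // sqr_ge0.
by move: Hs; rewrite sqrtr_sqr sqrtrM // sqrtr_sqr !ger0_norm.
Qed.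

Lemma main_ineq :
  \sum_(j < m) G (sP j) <=
  2 * Num.sqrt (m%:R * k%:R * 9 ^+ k) * Ex (fun r : {perm 'I_n} => `|X r|).
Proof.
set M := m%:R * k%:R * 9 ^+ k.
have M0 : 0 <= M by rewrite !mulr_ge0 ?ler0n ?exprn_ge0.
have per r : \sum_(j < m) Ex (fun e : T => `|Di j (fr r) e|) <=
             Num.sqrt M * Ex (fun e : T => `|fr r e|).
  apply: sqrt_bound => //.
  - by apply: sumr_ge0 => j _; apply: Ex_ge0 => e.
  - by apply: Ex_ge0 => e.
  - exact: cube_main (lowdeg_fr r).
have H := Ex_le per.
rewrite Ex_sum ExZ in H.
rewrite (Ex_swap (fun r e => `|fr r e|)) in H.
rewrite (Ex_ext (f := fun e : T => Ex (fun r => `|fr r e|)) (g := fun _ => Ex (fun r => `|X r|))) in H; last first.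
  move=> e; rewrite /fr.
  by rewrite (Ex_reindex (fun r : {perm 'I_n} => `|X r|) (mulIg (P e))).
rewrite (Ex_cst (x0 m)) in H.
rewrite (eq_bigr (fun j => G (sP j) / 2)) in H; last first.
  move=> j _; rewrite Ex_swap.
  rewrite (Ex_ext (g := fun _ => G (sP j) / 2)); first by rewrite (Ex_cst (x0 m)).
  move=> e; rewrite /Di /fr P_flip.
  set P0 := P (upd e j false).
  rewrite /G ExZ'.
  rewrite -(Ex_reindex (fun r : {perm 'I_n} => `|X (r * sP j)%g - X r| / 2) (mulIg P0)).
  apply: Ex_ext => r.
  rewrite normrM (@gtr0_norm _ (2^-1)) ?invr_gt0 //.
  by rewrite mulgA.
rewrite -mulr_suml in H.
rewrite -mulrA -ler_pdivrMl //.
by rewrite mulrC.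
Qed.

End Main.

Set Implicit Arguments. Unset Strict Implicit. Unset Printing Implicit Defensive.

Section Final.
Variable R : realType.
Variables (n k : nat).
Implicit Types w u : {set 'I_n} -> R.

Lemma inner_permf w u (p s : {perm 'I_n}) :
  inner k (permf p w) (permf s u) = inner k (permf (p * s^-1)%g w) u.
Proof.
rewrite /inner /permf.
rewrite (reindex_inj (h := fun e : {set 'I_n} => s @: e)); last first.
  exact: imset_inj (@perm_inj _ s).
apply: eq_big => e.
  by rewrite card_imset //; exact: perm_inj.
move=> _; congr (w _ * u _).
- rewrite -imset_comp; apply: eq_imset => z /=.
  by rewrite invMg invgK permM.
- rewrite -imset_comp (eq_imset (g := id)) ?imset_id // => z /=.
  by rewrite permK.
Qed.

Lemma X_permf w u (q r : {perm 'I_n}) : X k w (permf q u) r = X k w u (r * q^-1)%g.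
Proof. by rewrite /X inner_permf. Qed.

Lemma G_permf w u (q s : {perm 'I_n}) : G k w (permf q u) s = G k w u (s ^ q^-1)%g.
Proof.
rewrite /G.
rewrite -(Ex_reindex (fun r : {perm 'I_n} => `|X k w u (r * (s ^ q^-1))%g - X k w u r|) (mulIg (q^-1)%g)).
apply: Ex_ext => r; rewrite !X_permf.
by congr (`|X k w u _ - _|); rewrite /conjg invgK !mulgA mulgKV.
Qed.

Lemma Ex_permf w u (q : {perm 'I_n}) :
  Ex (fun r : {perm 'I_n} => `|X k w (permf q u) r|) = Ex (fun r : {perm 'I_n} => `|X k w u r|).
Proof.
rewrite (Ex_ext (g := fun r => `|X k w u (r * q^-1)%g|)); last by move=> r; rewrite X_permf.
exact: (Ex_reindex (fun r : {perm 'I_n} => `|X k w u r|) (mulIg (q^-1)%g)).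
Qed.

Lemma gamma_eq w u (x y : 'I_n) :
  gamma k x y w u = Ex (fun q : {perm 'I_n} => G k w u (tperm x y ^ q)%g).
Proof.
rewrite /gamma /Eperm.
rewrite -/(Ex _).
rewrite (Ex_ext (g := fun p => Ex (fun s : {perm 'I_n} =>
   `|X k w u (p * s^-1)%g - X k w u (p * tperm x y * s^-1)%g|))); last first.
  by move=> p; rewrite -/(Ex _); apply: Ex_ext => s; rewrite !inner_permf.
rewrite Ex_swap.
rewrite -(Ex_reindex (fun q : {perm 'I_n} => G k w u (tperm x y ^ q)%g) (@invg_inj _)).
apply: Ex_ext => s.
rewrite /G -(Ex_reindex _ (mulIg s)).
apply: Ex_ext => r.
rewrite distrC; congr (`|X k w u _ - X k w u _|).
  by rewrite /conjg invgK !mulgA.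
by rewrite -mulgA mulgV mulg1.
Qed.

Lemma conj_tperm (x y a b : 'I_n) : x != y -> a != b ->
  exists p : {perm 'I_n}, (tperm x y ^ p)%g = tperm a b.
Proof.
move=> xy ab.
set y' := tperm x a y.
have y'a : y' != a.
  by rewrite /y' -{2}(tpermL x a); apply: contra_neq xy => /perm_inj ->.
exists (tperm x a * tperm y' b)%g.
rewrite tpermJ !permM tpermL.
by rewrite tpermD // ?tpermL // eq_sym.
Qed.

Lemma conj_inv w u (x y a b : 'I_n) : x != y -> a != b ->
  Ex (fun q : {perm 'I_n} => G k w u (tperm a b ^ q)%g) =
  Ex (fun q : {perm 'I_n} => G k w u (tperm x y ^ q)%g).
Proof.
move=> xy ab; have [p Hp] := conj_tperm xy ab.
rewrite -(Ex_reindex (fun q : {perm 'I_n} => G k w u (tperm x y ^ q)%g) (mulgI p)).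
by apply: Ex_ext => q; rewrite conjgM Hp.
Qed.

Lemma sP_tperm (j : 'I_n./2) : exists a b : 'I_n, a != b /\ sP j = tperm a b.
Proof.
have Hv : forall z : 'I_n, val (sP j z) = if (val z)./2 == val j then partner z else z.
  move=> z; rewrite /sP PE pfun_val.
  case: insubP => [i Hi Ei|Hn].
    rewrite ffunE -Ei; congr (if _ then _ else _).
  by case: eqP => // E; move: Hn; rewrite E ltn_ord.
have ja : (2 * j < n)%N by have := ltn_ord j; lia.
pose a := Ordinal ja.
exists a, (sP j a); split.
  apply/negP => /eqP /(congr1 val); rewrite Hv /= /partner.
  rewrite (_ : (2 * j)./2 = j); last by lia.
  rewrite eqxx; lia.
apply/permP => z.
have [->|za] := eqVneq z a; first by rewrite tpermL.
have [->|zb] := eqVneq z (sP j a).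
  by rewrite tpermR /sP !PE pfunK.
rewrite tpermD 1?eq_sym //; apply: val_inj; rewrite Hv.
case: eqP => // E; exfalso.
move: za zb => /eqP za /eqP zb.
have va : val z <> val a by move=> /val_inj.
have vb : val z <> val (sP j a) by move=> /val_inj.
move: vb; rewrite Hv /= /partner.
rewrite (_ : (2 * j)./2 = j); last by lia.
rewrite eqxx /=; move: va => /= va.
rewrite mul2n odd_double /=; move: E; rewrite /= => E; lia.
Qed.

End Final.

Unset Implicit Arguments. Set Strict Implicit.

Lemma key_ineq (R : realType) (n k : nat) (x y : 'I_n) (w u : {set 'I_n} -> R) :
  x != y ->
  (n./2)%:R * gamma k x y w u <=
  2 * Num.sqrt ((n./2)%:R * k%:R * 9 ^+ k) * Ex (fun r : {perm 'I_n} => `|X k w u r|).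
Proof.
move=> xy.

have H q := main_ineq k w (permf q u).
have H' : forall q : {perm 'I_n}, \sum_(j < n./2) G k w u (sP j ^ q^-1)%g <=
     2 * Num.sqrt ((n./2)%:R * k%:R * 9 ^+ k) * Ex (fun r : {perm 'I_n} => `|X k w u r|).
  move=> q; have := H q; rewrite Ex_permf.
  have -> : \sum_(j < n./2) G k w (permf q u) (sP j) = \sum_(j < n./2) G k w u (sP j ^ q^-1)%g.
    by apply: eq_bigr => j _; rewrite G_permf.
  by [].
have := Ex_le H'; rewrite (Ex_cst 1%g) Ex_sum.
rewrite (eq_bigr (fun _ => gamma k x y w u)).
  rewrite sumr_const card_ord => h; apply: le_trans h; by rewrite mulr_natl.
move=> j _.
rewrite (Ex_reindex (fun q : {perm 'I_n} => G k w u (sP j ^ q)%g) (@invg_inj _)).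
have [a [b [ab ->]]] := sP_tperm j.
by rewrite (conj_inv k w u xy ab) gamma_eq.
Qed.

Theorem lemma4p2 (R : realType) (k : nat) : (1 <= k)%N ->
  exists c : R, 0 < c /\
    forall (n : nat) (x y : 'I_n) (w u : {set 'I_n} -> R),
      (k <= n)%N -> x != y ->
      c * gamma k x y w u * Num.sqrt (n%:R) <=
      Eperm (fun pi : {perm 'I_n} => `| inner k (permf pi w) u |).
Proof.
move=> k1.
set K : R := k%:R * 9 ^+ k.
have K1 : 1 <= K.
  rewrite /K; have k1' : 1 <= k%:R :> R by rewrite ler1n.
  have : 1 <= 9 ^+ k :> R by apply: exprn_ege1; rewrite ler1n.
  nra.
exists (4 * K)^-1; split; first by rewrite invr_gt0; lra.
move=> n x y w u kn xy.
set c := (4 * K)^-1.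
have c0 : 0 < c by rewrite invr_gt0; lra.
have cK : c * (4 * K) = 1 by rewrite mulVf //; lra.
set m := n./2.
have n2 : (2 <= n)%N.
  clear -xy; case: x y xy => [x1 h1] [y1 h2]; rewrite -val_eqE /= => h; lia.
have m1 : 1 <= m%:R :> R by rewrite ler1n /m; lia.
have nm : n%:R <= 4 * m%:R :> R.
  have : (n <= 4 * m)%N by rewrite /m; lia.
  by rewrite -(ler_nat R) natrM.
have Key := @key_ineq R n k x y w u xy.
rewrite -/m in Key.
set g := gamma k x y w u in Key *.
set E := Ex _ in Key.
have -> : Eperm (fun pi : {perm 'I_n} => `| inner k (permf pi w) u |) = E by [].
have g0 : 0 <= g.
  rewrite /g gamma_eq; apply: Ex_ge0 => q; apply: Ex_ge0 => r //.
have E0 : 0 <= E by apply: Ex_ge0.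
clearbody E.
have M_eq : m%:R * k%:R * 9 ^+ k = m%:R * K :> R by rewrite /K mulrA.
rewrite M_eq in Key.
have K0 : 0 <= K by lra.
have m0 : 0 <= m%:R :> R by lra.
clearbody K m c.
have Key2 : m%:R * g ^+ 2 <= 4 * K * E ^+ 2.
  have S : (m%:R * g) ^+ 2 <= (2 * Num.sqrt (m%:R * K) * E) ^+ 2.
    rewrite !expr2; apply: ler_pM => //; by rewrite mulr_ge0.
  have : (2 * Num.sqrt (m%:R * K) * E) ^+ 2 = 4 * (m%:R * K) * E ^+ 2.
    rewrite !exprMn sqr_sqrtr; last exact: mulr_ge0.
    have h4 : (2 : R) ^+ 2 = 4 by rewrite expr2; lra.
    by rewrite h4.
  move=> Eq; rewrite Eq in S.
  have : m%:R * (m%:R * g ^+ 2) <= m%:R * (4 * K * E ^+ 2).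
    have e1 : m%:R * (m%:R * g ^+ 2) = (m%:R * g) ^+ 2 :> R by ring.
    have e2 : m%:R * (4 * K * E ^+ 2) = 4 * (m%:R * K) * E ^+ 2 :> R by ring.
    by rewrite e1 e2.
  by rewrite ler_pM2l //; lra.
have sn0 : 0 <= Num.sqrt n%:R :> R by apply: sqrtr_ge0.
apply: sqrle; first by [].
have -> : (c * g * Num.sqrt n%:R) ^+ 2 = c ^+ 2 * g ^+ 2 * n%:R.
  by rewrite !exprMn sqr_sqrtr ?ler0n.
have c4 : 4 * c <= 1.
  have : c * (4 * K) = 1 := cK.
  nra.
have Hn : c ^+ 2 * g ^+ 2 * n%:R <= 4 * c ^+ 2 * (m%:R * g ^+ 2).
  have : 0 <= c ^+ 2 * g ^+ 2 by rewrite mulr_ge0 ?sqr_ge0.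
  nra.
apply: (le_trans Hn).
have : 4 * c ^+ 2 * (m%:R * g ^+ 2) <= 4 * c ^+ 2 * (4 * K * E ^+ 2).
  by apply: ler_wpM2l => //; rewrite mulr_ge0 ?sqr_ge0.
move/le_trans; apply.
have -> : 4 * c ^+ 2 * (4 * K * E ^+ 2) = 4 * c * (c * (4 * K)) * E ^+ 2 by ring.
rewrite cK mulr1.
have : 0 <= E ^+ 2 by apply: sqr_ge0.
nra.
Qed.
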